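(* Let $M$ be a mechanism that is $\delta$-Pareto efficient in all equilibria, and let $k$ be a positive integer. Let $M^k$ be the mechanism which, on a collection $A$ of $n$ alternatives, acts as $M$ acting on the collection $k$-$UN(A)$ (i.e., the players use the signals of $M$ for the collection $k$-$UN(A)$, $M$ selects a random element of $k$-$UN(A)$, i.e. a $k$-uniform distribution, and the final index is drawn from it). Then $M^k$ is $(\delta+\frac1k)$-close to the Pareto frontier in all equilibria.
   Context: Two players bargain over a collection (multiset) $A=(a^j)_{j\in[n]}\subset[0,1]^2$, $a^j_i$ being player $i$'s utility. A mechanism $M=(M_n)_n$ specifies for each $n$ signal sets $\Sigma_1(n),\Sigma_2(n)$ and a map $f_n:\Sigma_1(n)\times\Sigma_2(n)\to\Delta([n])$; with risk-neutral players it induces a game $\Gamma_M(A)$ with expected-utility payoffs, and $NEO_M(A)$ denotes its set of pure Nash equilibrium outcomes (expected utility vectors). A $k$-uniform distribution over $[n]$ is the uniform distribution over a multiset of size $k$ from $[n]$; $k$-$UN(A)$ is the collection, indexed by the $k$-uniform distributions $\mu$, of the points $\mathbb{E}_{j\sim\mu}[a^j]$. An allocation $x$ is $\varepsilon$-Pareto efficient w.r.t. a collection $C$ if no $c\in C$ has $c_1>x_1+\varepsilon$ and $c_2>x_2+\varepsilon$; $M$ is $\varepsilon$-Pareto efficient in all equilibria if for every collection $C$ every $x\in NEO_M(C)$ is $\varepsilon$-Pareto efficient w.r.t. $C$. $x$ is $\varepsilon$-close to the Pareto frontier of $A$ if no $y\in\mathrm{conv}(A)$ has $y_1>x_1+\varepsilon$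 and $y_2>x_2+\varepsilon$; a mechanism is $\varepsilon$-close to the Pareto frontier in all equilibria if for every collection $A$ every $x\in NEO(A)$ is $\varepsilon$-close to the Pareto frontier of $A$. *)

(* Defs.v *)
From HB Require Import structures.
From mathcomp Require Import all_boot all_order all_algebra.
Set Implicit Arguments. Unset Strict Implicit. Unset Printing Implicit Defensive.
Import Order.TTheory GRing.Theory Num.Theory.
Local Open Scope ring_scope.

Section Bargaining.
Variable R : realFieldType.

Definition collection (n : nat) (a : 'I_n -> R * R) : Prop :=
  forall j, (0 <= (a j).1 <= 1) /\ (0 <= (a j).2 <= 1).

Definition is_distr (n : nat) (p : 'I_n -> R) : Prop :=
  (forall j, 0 <= p j) /\ \sum_j p j = 1.

Definition expected (n : nat) (p : 'I_n -> R) (a : 'I_n -> R * R) : R * R :=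
  (\sum_j p j * (a j).1, \sum_j p j * (a j).2).

Record mechanism := Mechanism {
  Sig1 : nat -> Type;
  Sig2 : nat -> Type;
  mech_f : forall n, Sig1 n -> Sig2 n -> 'I_n -> R }.

Definition valid_mechanism (M : mechanism) : Prop :=
  forall n (s1 : Sig1 M n) (s2 : Sig2 M n), is_distr (mech_f s1 s2).

Definition payoff (M : mechanism) (n : nat) (a : 'I_n -> R * R)
  (s1 : Sig1 M n) (s2 : Sig2 M n) : R * R := expected (mech_f s1 s2) a.

Definition is_NE (M : mechanism) (n : nat) (a : 'I_n -> R * R)
  (s1 : Sig1 M n) (s2 : Sig2 M n) : Prop :=
  (forall s1' : Sig1 M n, (payoff a s1' s2).1 <= (payoff a s1 s2).1) /\
  (forall s2' : Sig2 M n, (payoff a s1 s2').2 <= (payoff a s1 s2).2).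

Definition NEO (M : mechanism) (n : nat) (a : 'I_n -> R * R) (x : R * R) : Prop :=
  exists (s1 : Sig1 M n) (s2 : Sig2 M n), is_NE a s1 s2 /\ x = payoff a s1 s2.

Definition eps_pareto_efficient (eps : R) (n : nat) (C : 'I_n -> R * R)
  (x : R * R) : Prop :=
  ~ exists j, x.1 + eps < (C j).1 /\ x.2 + eps < (C j).2.

Definition pareto_efficient_all_equilibria (eps : R) (M : mechanism) : Prop :=
  forall n (C : 'I_n -> R * R), collection C ->
  forall x, NEO M C x -> eps_pareto_efficient eps C x.

Definition in_conv (n : nat) (a : 'I_n -> R * R) (y : R * R) : Prop :=
  exists p : 'I_n -> R, is_distr p /\ y = expected p a.

Definition eps_close_frontier (eps : R) (n : nat) (a : 'I_n -> R * R)
  (x : R * R) : Prop :=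
  ~ exists y, in_conv a y /\ x.1 + eps < y.1 /\ x.2 + eps < y.2.

Definition close_frontier_all_equilibria (eps : R) (M : mechanism) : Prop :=
  forall n (a : 'I_n -> R * R), collection a ->
  forall x, NEO M a x -> eps_close_frontier eps a x.

(* multisets of size k from [n], as multiplicity functions *)
Definition kmultiset (n k : nat) :=
  {c : {ffun 'I_n -> 'I_k.+1} | (\sum_j (nat_of_ord (c j)) == k)%N}.

Definition kuniform (n k : nat) (c : kmultiset n k) : 'I_n -> R :=
  fun j => (nat_of_ord (val c j))%:R / k%:R.

Definition kUN_size (n k : nat) : nat := #|{: kmultiset n k}|.

Definition kUN (n k : nat) (e : 'I_(kUN_size n k) -> kmultiset n k)
  (a : 'I_n -> R * R) : 'I_(kUN_size n k) -> R * R :=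
  fun i => expected (kuniform (e i)) a.

(* M^k: run M on k-UN(A), then draw the final index from the selected
   k-uniform distribution.  e n enumerates the k-uniform distributions on [n]. *)
Definition mech_k (M : mechanism) (k : nat)
  (e : forall n, 'I_(kUN_size n k) -> kmultiset n k) : mechanism :=
  @Mechanism (fun n => Sig1 M (kUN_size n k)) (fun n => Sig2 M (kUN_size n k))
    (fun n s1 s2 j =>
       \sum_(i : 'I_(kUN_size n k)) mech_f s1 s2 i * kuniform (e n i) j).

End Bargaining.

(* Main.v *)
Require Import Defs.
From HB Require Import structures.
From mathcomp Require Import all_boot all_order all_algebra.
From mathcomp Require Import ring lra zify.
Import Order.TTheory GRing.Theory Num.Theory.
Local Open Scope ring_scope.
Set Implicit Arguments. Unset Strict Implicit.
Section S.
Variable R : realFieldType.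
Lemma select (wa wb wc da db dc : R) :
  0 <= wa -> 0 <= wb -> 0 <= wc -> wa + wb + wc = 1 -> da + db + dc = 0 ->
  (da != 0) || (db != 0) || (dc != 0) ->
  (da < 0 /\ 0 <= (-da)*wb + wa*db /\ 0 <= (-da)*wc + wa*dc) \/
  (db < 0 /\ 0 <= (-db)*wa + wb*da /\ 0 <= (-db)*wc + wb*dc) \/
  (dc < 0 /\ 0 <= (-dc)*wa + wc*da /\ 0 <= (-dc)*wb + wc*db).
Proof.
move=> ha hb hc hs hd hnz.
have [la|la] := ltP da 0; have [lb|lb] := ltP db 0; have [lc|lc] := ltP dc 0.
- exfalso; lra.
- nra.
- nra.
- nra.
- nra.
- nra.
- nra.
- exfalso. move: hnz. have -> : da = 0 by lra. have -> : db = 0 by lra. have -> : dc = 0 by lra. by rewrite eqxx.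
Qed.
Lemma dir (U1 U2 V1 V2 : R) : exists b g : R,
  ((b != 0) || (g != 0)) /\ 0 <= b*U1 + g*V1 /\ 0 <= b*U2 + g*V2.
Proof.
set det := U1*V2 - V1*U2.
have [dp|dn|d0] := ltgtP det 0.
- exists (V1 - V2), (U2 - U1); split; last by split; rewrite /det in dp; nra.
  case: eqP => h1 //=; case: eqP => h2 //=; exfalso.
  have e1 : V1 = V2 by lra. have e2 : U1 = U2 by lra.
  rewrite /det e1 e2 in dp; nra.
- exists (V2 - V1), (U1 - U2); split; last by split; rewrite /det in dn; nra.
  case: eqP => h1 //=; case: eqP => h2 //=; exfalso.
  have e1 : V1 = V2 by lra. have e2 : U1 = U2 by lra.
  rewrite /det e1 e2 in dn; nra.
- have [h|h] := boolP ((V2 - V1 != 0) || (U1 - U2 != 0)).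
    exists (V2 - V1), (U1 - U2); split => //; rewrite /det in d0; split; nra.
  move: h; rewrite negb_or !negbK => /andP[/eqP h1 /eqP h2].
  have e1 : V1 = V2 by lra. have e2 : U1 = U2 by lra.
  have [hv|hv] := boolP (V1 != 0).
    exists V1, (-U1); split; first by rewrite hv.
    by rewrite e1 e2; split; nra.
  move: hv; rewrite negbK => /eqP hv.
  exists 0, 1; rewrite oner_eq0 eqxx /=; split => //; rewrite -e1 hv; split; lra.
Qed.
Lemma move (wi wj wk di dj dk Pi1 Pi2 Pj1 Pj2 Pk1 Pk2 : R) :
  0 <= wi -> wi + wj + wk = 1 -> di + dj + dk = 0 -> di < 0 ->
  0 <= -di*wj + wi*dj -> 0 <= -di*wk + wi*dk ->
  0 <= di*Pi1 + dj*Pj1 + dk*Pk1 -> 0 <= di*Pi2 + dj*Pj2 + dk*Pk2 ->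
  exists t, (0 <= t <= 1) /\ wi*Pi1 + wj*Pj1 + wk*Pk1 <= t*Pj1 + (1-t)*Pk1
     /\ wi*Pi2 + wj*Pj2 + wk*Pk2 <= t*Pj2 + (1-t)*Pk2.
Proof.
move=> hi hs hd hneg cj ck D1 D2.
have ek : wk = 1 - wi - wj by lra.
have edk : dk = - di - dj by lra.
rewrite ek edk in ck D1 D2 *.
have ndi : di != 0 by rewrite lt_eqF.
have pdi : 0 < - di by lra.
exists ((-di*wj + wi*dj) / (-di)).
have e1 : 1 - (-di*wj + wi*dj) / (-di) = (-di*(1 - wi - wj) + wi*(-di-dj)) / (-di).
  by field.
rewrite e1; split; first by apply/andP; split; [apply: divr_ge0 => //; lra|
  rewrite -subr_ge0 e1; apply: divr_ge0 => //; lra].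
have key : forall P1 P2 P3 : R,
  (-di*wj + wi*dj) / (-di) * P2 + (-di*(1 - wi - wj) + wi*(-di-dj)) / (-di) * P3
  = wi*P1 + wj*P2 + (1-wi-wj)*P3 + wi * (di*P1 + dj*P2 + (-di-dj)*P3) / (-di).
  by move=> P1 P2 P3; field.
rewrite (key Pi1) (key Pi2); split; rewrite -subr_ge0 addrAC subrr add0r;
  (apply: divr_ge0; last lra); apply: mulr_ge0 => //.
Qed.
Definition domby (y P Q : R * R) := exists t : R, (0 <= t <= 1) /\
  y.1 <= t * P.1 + (1 - t) * Q.1 /\ y.2 <= t * P.2 + (1 - t) * Q.2.

Lemma three (wa wb wc : R) (A B C : R * R) :
  0 <= wa -> 0 <= wb -> 0 <= wc -> wa + wb + wc = 1 ->
  let y := (wa * A.1 + wb * B.1 + wc * C.1, wa * A.2 + wb * B.2 + wc * C.2) in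
  domby y B C \/ domby y A C \/ domby y A B.
Proof.
move=> ha hb hc hs y.
have [b [g [nz [D1 D2]]]] := dir (B.1 - A.1) (B.2 - A.2) (C.1 - A.1) (C.2 - A.2).
have hd : - (b + g) + b + g = 0 by lra.
have nz' : (- (b + g) != 0) || (b != 0) || (g != 0) by case/orP: nz => ->; rewrite ?orbT.
have D1' : 0 <= - (b + g) * A.1 + b * B.1 + g * C.1 by nra.
have D2' : 0 <= - (b + g) * A.2 + b * B.2 + g * C.2 by nra.
case: (select ha hb hc hs hd nz') => [[h1 [h2 h3]]|[[h1 [h2 h3]]|[h1 [h2 h3]]]].
- left; have [t [ht [e1 e2]]] := move ha hs hd h1 h2 h3 D1' D2'.
  by exists t.
- right; left.
  have hs' : wb + wa + wc = 1 by lra.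
  have hd' : b + - (b + g) + g = 0 by lra.
  have D1'' : 0 <= b * B.1 + - (b + g) * A.1 + g * C.1 by lra.
  have D2'' : 0 <= b * B.2 + - (b + g) * A.2 + g * C.2 by lra.
  have [t [ht [e1 e2]]] := move hb hs' hd' h1 h2 h3 D1'' D2''.
  by exists t; split => //; rewrite /y /=; split; lra.
- right; right.
  have hs' : wc + wa + wb = 1 by lra.
  have hd' : g + - (b + g) + b = 0 by lra.
  have D1'' : 0 <= g * C.1 + - (b + g) * A.1 + b * B.1 by lra.
  have D2'' : 0 <= g * C.2 + - (b + g) * A.2 + b * B.2 by lra.
  have [t [ht [e1 e2]]] := move hc hs' hd' h1 h2 h3 D1'' D2''.
  by exists t; split => //; rewrite /y /=; split; lra.
Qed.

Definition sdom (s : R) (y P Q : R * R) := exists t : R, (0 <= t <= 1) /\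
  y.1 <= s * (t * P.1 + (1 - t) * Q.1) /\ y.2 <= s * (t * P.2 + (1 - t) * Q.2).

Lemma sthree (wa wb wc : R) (A B C : R * R) :
  0 <= wa -> 0 <= wb -> 0 <= wc ->
  let y := (wa * A.1 + wb * B.1 + wc * C.1, wa * A.2 + wb * B.2 + wc * C.2) in
  let s := wa + wb + wc in
  sdom s y B C \/ sdom s y A C \/ sdom s y A B.
Proof.
move=> ha hb hc y s.
have [s0|sp] : s = 0 \/ 0 < s by rewrite /s; lra.
  have ea : wa = 0 by rewrite /s in s0; lra.
  have eb : wb = 0 by rewrite /s in s0; lra.
  have ec : wc = 0 by rewrite /s in s0; lra.
  left; exists 0; rewrite /y s0 ea eb ec /=; split; first by rewrite lexx ler01.
  by split; lra.
have sn : s != 0 by rewrite gt_eqF.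
have ha' : 0 <= wa / s by apply: divr_ge0 => //; lra.
have hb' : 0 <= wb / s by apply: divr_ge0 => //; lra.
have hc' : 0 <= wc / s by apply: divr_ge0 => //; lra.
have hs : wa / s + wb / s + wc / s = 1 by rewrite -!mulrDl divff.
have conv : forall P Q, domby ((wa / s) * A.1 + (wb / s) * B.1 + (wc / s) * C.1,
    (wa / s) * A.2 + (wb / s) * B.2 + (wc / s) * C.2) P Q -> sdom s y P Q.
  move=> P Q [t [ht [e1 e2]]]; exists t; split => //; rewrite /y /=.
  have f : forall x1 x2 x3 : R, wa / s * x1 + wb / s * x2 + wc / s * x3 =
     (wa * x1 + wb * x2 + wc * x3) / s by move=> *; field.
  rewrite !f /= in e1 e2.
  by move: e1 e2; rewrite !ler_pdivrMr // => e1 e2; split; lra.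
case: (three A B C ha' hb' hc' hs) => [h|[h|h]]; [left|right;left|right;right];
  apply: conv; exact: h.
Qed.

Lemma sdom_mono s s2 (y y2 P Q : R * R) : sdom s y P Q -> s = s2 ->
  y2.1 <= y.1 -> y2.2 <= y.2 -> sdom s2 y2 P Q.
Proof.
move=> [t [ht [e1 e2]]] <- h1 h2; exists t; split => //; split; lra.
Qed.

Lemma dom2 n (a : 'I_n.+1 -> R * R) (p : 'I_n.+1 -> R) : (forall j, 0 <= p j) ->
  exists u v, sdom (\sum_j p j) (\sum_j p j * (a j).1, \sum_j p j * (a j).2)
    (a u) (a v).
Proof.
elim: n a p => [|n IH] a p hp.
  exists ord0, ord0, 1; rewrite !big_ord1 /=; split; first by rewrite lexx ler01.
  split; lra.
have [u [v [t [ht [e1 e2]]]]] := IH (fun i => a (widen_ord (leqnSn _) i))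
   (fun i => p (widen_ord (leqnSn _) i)) (fun i => hp _).
simpl in e1, e2.
rewrite [\sum_(j < n.+2) p j]big_ord_recr [\sum_(j < n.+2) p j * _]big_ord_recr
  [\sum_(j < n.+2) p j * _]big_ord_recr /=.
set s' := \sum_(i < n.+1) p (widen_ord (leqnSn _) i) in e1 e2 *.
set S1 := \sum_(i < n.+1) p (widen_ord (leqnSn _) i) * _ in e1 *.
set S2 := \sum_(i < n.+1) p (widen_ord (leqnSn _) i) * _ in e2 *.
have s'0 : 0 <= s' by apply: sumr_ge0 => i _; apply: hp.
have t0 : 0 <= t by case/andP: ht.
have t1 : 0 <= 1 - t by case/andP: ht => _; rewrite subr_ge0.
have wa0 : 0 <= s' * t by apply: mulr_ge0.
have wb0 : 0 <= s' * (1 - t) by apply: mulr_ge0.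
have es : s' * t + s' * (1 - t) + p ord_max = s' + p ord_max by ring.
have f1 : S1 + p ord_max * (a ord_max).1 <= s' * t * (a (widen_ord (leqnSn _) u)).1
   + s' * (1 - t) * (a (widen_ord (leqnSn _) v)).1 + p ord_max * (a ord_max).1 by move: e1; rewrite mulrDr !mulrA; lra.
have f2 : S2 + p ord_max * (a ord_max).2 <= s' * t * (a (widen_ord (leqnSn _) u)).2
   + s' * (1 - t) * (a (widen_ord (leqnSn _) v)).2 + p ord_max * (a ord_max).2 by move: e2; rewrite mulrDr !mulrA; lra.
case: (sthree (a (widen_ord (leqnSn _) u)) (a (widen_ord (leqnSn _) v)) (a ord_max)
   wa0 wb0 (hp ord_max)) => [h|[h|h]].
- by exists (widen_ord (leqnSn _) v), ord_max; apply: (sdom_mono h).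
- by exists (widen_ord (leqnSn _) u), ord_max; apply: (sdom_mono h).
- by exists (widen_ord (leqnSn _) u), (widen_ord (leqnSn _) v); apply: (sdom_mono h).
Qed.

Lemma exists_round (k : nat) (x : R) : 0 <= x -> x <= k%:R ->
  exists m : nat, (m <= k)%N /\ m%:R <= x /\ x <= m%:R + 1.
Proof.
elim: k => [|k IH] h0 h1.
  by exists 0%N; split => //; split; lra.
have [hk|hk] := lerP x k%:R.
  by have [m [hm [e1 e2]]] := IH h0 hk; exists m; split => //; apply: leqW.
by exists k; split => //; rewrite -natr1 in h1; split; lra.
Qed.

Lemma sum_if1 n (u : 'I_n) (F : 'I_n -> R) :
  \sum_j (if j == u then F j else 0) = F u.
Proof. by rewrite -big_mkcond big_pred1_eq. Qed.

Lemma sum_if1n n (u : 'I_n) (m : nat) :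
  (\sum_j (if j == u then m else 0))%N = m.
Proof. by rewrite -big_mkcond big_pred1_eq. Qed.

Lemma round_ms n k (a : 'I_n -> R * R) (u v : 'I_n) (t : R) :
  (0 < k)%N -> collection a -> 0 <= t <= 1 ->
  exists c : kmultiset n k,
    t * (a u).1 + (1 - t) * (a v).1 - k%:R^-1 <= (expected (kuniform R c) a).1 /\
    t * (a u).2 + (1 - t) * (a v).2 - k%:R^-1 <= (expected (kuniform R c) a).2.
Proof.
move=> kp col /andP[t0 t1].
have rp : 0 < k%:R :> R by rewrite ltr0n.
have rn : k%:R != 0 :> R by rewrite gt_eqF.
have hx0 : 0 <= t * k%:R by apply: mulr_ge0 => //; exact: ler0n.
have hx1 : t * k%:R <= k%:R by rewrite -[X in _ <= X]mul1r; apply: ler_wpM2r => //; exact: ler0n.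
have [m [mk [e1 e2]]] := exists_round hx0 hx1.
pose g (j : 'I_n) : nat := ((if j == u then m else 0) + (if j == v then k - m else 0))%N.
have gk : forall j, (g j < k.+1)%N.
  move=> j; rewrite ltnS /g.
  by case: (j == u); case: (j == v) => /=; lia.
pose cf : {ffun 'I_n -> 'I_k.+1} := [ffun j => inord (g j)].
have cfE : forall j, nat_of_ord (cf j) = g j by move=> j; rewrite ffunE inordK.
have hsum : (\sum_j nat_of_ord (cf j) == k)%N.
  under eq_bigr do rewrite cfE.
  by rewrite /g big_split /= !sum_if1n subnKC.
exists (exist _ cf hsum).
have key : forall z : R * R -> R, (forall j, 0 <= z (a j) <= 1) ->
   t * z (a u) + (1 - t) * z (a v) - k%:R^-1 <=
   \sum_j kuniform R (exist _ cf hsum) j * z (a j).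
  move=> z hz.
  have E : forall j, kuniform R (exist _ cf hsum) j * z (a j) =
     (if j == u then m%:R / k%:R * z (a j) else 0) +
     (if j == v then (k - m)%:R / k%:R * z (a j) else 0).
    move=> j; rewrite /kuniform /= cfE /g natrD mulrDl mulrDl.
    by case: (j == u); case: (j == v); rewrite /= ?mul0r ?add0r ?addr0.
  under eq_bigr do rewrite E.
  rewrite big_split /= !sum_if1 natrB // [(k%:R - _) / _]mulrBl divff //.
  set mu := m%:R / k%:R.
  set ik := k%:R^-1.
  have hik : k%:R * ik = 1 by rewrite /ik divff.
  have hmu : mu = m%:R * ik by [].
  have ha := hz u; have hb := hz v.
  move/andP: ha => [ha0 ha1]; move/andP: hb => [hb0 hb1].
  have ik0 : 0 < ik by rewrite /ik invr_gt0.
  have f1 : mu <= t.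
    by rewrite /mu ler_pdivrMr // .
  have f2 : t <= mu + ik.
    have -> : mu + ik = (m%:R + 1) / k%:R by rewrite /mu /ik mulrDl mul1r.
    by rewrite ler_pdivlMr.
  have f3 : 0 <= (t - mu) * (1 - (z (a u) - z (a v))) by apply: mulr_ge0; lra.
  nra.
split.
  by apply: (key (fun p => p.1)) => j; have [h _] := col j; exact: h.
by apply: (key (fun p => p.2)) => j; have [_ h] := col j; exact: h.
Qed.

Lemma kuniform_distr n k (c : kmultiset n k) : (0 < k)%N -> is_distr (kuniform R c).
Proof.
move=> kp; split.
  by move=> j; rewrite /kuniform; apply: divr_ge0; exact: ler0n.
rewrite /kuniform -mulr_suml -natr_sum (eqP (valP c)) divff //.
by rewrite pnatr_eq0 -lt0n.
Qed.

Lemma expected_coll n (p : 'I_n -> R) (a : 'I_n -> R * R) :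
  is_distr p -> collection a ->
  (0 <= (expected p a).1 <= 1) /\ (0 <= (expected p a).2 <= 1).
Proof.
move=> [p0 p1] col.
have gen : forall z : R * R -> R, (forall j, 0 <= z (a j) <= 1) ->
    0 <= \sum_j p j * z (a j) <= 1.
  move=> z hz; apply/andP; split.
    by apply: sumr_ge0 => j _; apply: mulr_ge0 => //; case/andP: (hz j).
  rewrite -p1; apply: ler_sum => j _.
  by rewrite -[X in _ <= X]mulr1; apply: ler_wpM2l => //; case/andP: (hz j).
split.
  by apply: (gen (fun q => q.1)) => j; have [h _] := col j.
by apply: (gen (fun q => q.2)) => j; have [_ h] := col j.
Qed.

Lemma payoff_k (M : mechanism R) k (e : forall n, 'I_(kUN_size n k) -> kmultiset n k)
  n (a : 'I_n -> R * R) (s1 : Sig1 (mech_k M e) n) (s2 : Sig2 (mech_k M e) n) :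
  @payoff R (mech_k M e) n a s1 s2 = @payoff R M _ (kUN (e n) a) s1 s2.
Proof.
rewrite /payoff /expected /kUN /=; congr pair;
  under eq_bigr do rewrite mulr_suml;
  rewrite exchange_big; apply: eq_bigr => i _; rewrite /expected /= mulr_sumr;
  apply: eq_bigr => j _; by rewrite mulrA.
Qed.

Lemma dom2' n (a : 'I_n -> R * R) (p : 'I_n -> R) : is_distr p ->
  exists u v, domby (expected p a) (a u) (a v).
Proof.
case: n a p => [|n] a p [p0 p1].
  by exfalso; move: p1; rewrite big_ord0 => /eqP; rewrite eq_sym oner_eq0.
have [u [v [t [ht [e1 e2]]]]] := dom2 a p0.
exists u, v, t; split => //; rewrite /expected /=; rewrite p1 !mul1r in e1 e2.
by split.
Qed.
End S.

Theorem proposition4 (R : realFieldType) (M : mechanism R) (delta : R) (k : nat)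
  (e : forall n, 'I_(kUN_size n k) -> kmultiset n k) :
  valid_mechanism M ->
  pareto_efficient_all_equilibria delta M ->
  (0 < k)%N ->
  (forall n, bijective (e n)) ->
  close_frontier_all_equilibria (delta + k%:R^-1) (mech_k M e).
Proof.
move=> valid par kp bij n a col x [s1 [s2 [[NE1 NE2] ->]]] [y [[p [pd ->]] [h1 h2]]].
set C := kUN (e n) a.
have colC : collection C.
  by move=> i; apply: expected_coll col; exact: kuniform_distr.
have NEM : is_NE C s1 s2.
  by split => s'; [move: (NE1 s') | move: (NE2 s')]; rewrite !payoff_k.
have := par _ C colC (payoff C s1 s2) (ex_intro _ s1 (ex_intro _ s2 (conj NEM erefl))).
rewrite payoff_k in h1 h2.
apply.
have [u [v [t [ht [f1 f2]]]]] := dom2' a pd.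
have [c [g1 g2]] := round_ms u v kp col ht.
have [g _ K] := bij n.
exists (g c).
rewrite /C /kUN K.
split; lra.
Qed.
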